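(* Let $(V_n)_{n\ge1}$ be a sequence in $\mathcal{V}$ with $\mathcal{L}_{V_n}(0)\to\infty$. The following are equivalent: (1) $(\mathcal{L}_{V_n})$ has a cutoff; (2) for all $\epsilon>0$ and $c>0$, $T_{V_n}(\epsilon)\lambda_{V_n}(c)\to\infty$; (3) there is $\epsilon>0$ such that $T_{V_n}(\epsilon)\lambda_{V_n}(c)\to\infty$ for all $c>0$; (4) for all $c>0$, $\tau_{V_n}(c)\lambda_{V_n}(c)\to\infty$; (5) for all $\tilde c>0$ and $c>0$, $\tau_{V_n}(\tilde c)\lambda_{V_n}(c)\to\infty$; (6) there is $\tilde c>0$ such that $\tau_{V_n}(\tilde c)\lambda_{V_n}(c)\to\infty$ for all $c>0$. Moreover, if $(\mathcal{L}_{V_n})$ has a cutoff, then $\tau_{V_n}(c)$ is a cutoff time for every $c>0$, and \[ |T_{V_n}(\epsilon)-T_{V_n}(\delta)|=O(1/\lambda_{V_n}(c))\quad\forall\epsilon,\delta,c\in(0,\infty), \] \[ |T_{V_n}(\epsilon)-\tau_{V_n}(c)|=O\Big(\sqrt{\tau_{V_n}(c)/\lambda_{V_n}(c)}\Big)\quad\forall\epsilon,c\in(0,\infty). \]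
   Context: $\mathcal{V}$ is the class of non-decreasing right-continuous $V:(0,\infty)\to\mathbb{R}$ with $\lim_{\lambda\to0^+}V(\lambda)=0$, $\lim_{\lambda\to\infty}V(\lambda)<\infty$; $\mathcal{L}_V(t)=\int_{(0,\infty)}e^{-t\lambda}dV(\lambda)$ for $t\ge0$. Mixing time: $T_V(\epsilon)=\min\{t\ge0:\mathcal{L}_V(t)\le\epsilon\}$. For $c\in(0,\mathcal{L}_V(0))$: $\lambda_V(c)=\inf\{\lambda:V(\lambda)>c\}$ and $\tau_V(c)=\sup_{\lambda\ge\lambda_V(c)}\frac{\log(1+V(\lambda))}{\lambda}$ (these are defined for all large $n$ since $\mathcal{L}_{V_n}(0)\to\infty$). Cutoff: with $M=\limsup_n\mathcal{L}_{V_n}(0)$, there exist $t_n>0$ with $\mathcal{L}_{V_n}(at_n)\to0$ for all $a>1$ and $\mathcal{L}_{V_n}(at_n)\to M$ for all $a\in(0,1)$; $t_n$ is then a cutoff time. For positive sequences, $a_n=O(b_n)$ means $\sup_n a_n/b_n<\infty$. *)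

(* Defs.v *)
From Stdlib Require Import Reals Lra Classical ClassicalEpsilon.
Open Scope R_scope.

(* The class 𝒱: V : (0,∞) -> R (values at λ <= 0 are irrelevant). *)
Definition inV (V : R -> R) : Prop :=
  (forall x y, 0 < x -> x <= y -> V x <= V y) /\
  (forall x, 0 < x -> forall eps, 0 < eps ->
     exists d, 0 < d /\ forall y, x <= y < x + d -> Rabs (V y - V x) < eps) /\
  (forall eps, 0 < eps -> exists d, 0 < d /\
     forall y, 0 < y < d -> Rabs (V y) < eps) /\
  (exists l, forall eps, 0 < eps -> exists N, forall y, N < y -> Rabs (V y - l) < eps).

(* Lower Stieltjes sum of λ ↦ e^{-tλ} against dV over the partition
   (0, x 0] , (x 0, x 1], ..., (x (k-1), x k]  (with V(0+) = 0). *)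
Fixpoint lsum (V : R -> R) (t : R) (x : nat -> R) (k : nat) : R :=
  match k with
  | O => exp (- t * x O) * V (x O)
  | S k' => lsum V t x k' + exp (- t * x k) * (V (x k) - V (x k'))
  end.

Definition partition (x : nat -> R) (k : nat) : Prop :=
  0 < x O /\ forall i, (i < k)%nat -> x i < x (S i).

Definition LapSums (V : R -> R) (t : R) (s : R) : Prop :=
  exists x k, partition x k /\ s = lsum V t x k.

(* L_V(t) = ∫_{(0,∞)} e^{-tλ} dV(λ), as the supremum of lower sums
   (the integrand is decreasing, so e^{-t x_{i+1}} is its infimum on (x_i,x_{i+1}]). *)
Definition Lap (V : R -> R) (t : R) : R :=
  epsilon (inhabits 0) (fun l => is_lub (LapSums V t) l).

Definition is_glb (E : R -> Prop) (l : R) : Prop :=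
  (forall x, E x -> l <= x) /\ (forall b, (forall x, E x -> b <= x) -> b <= l).

Definition Tmix (V : R -> R) (eps : R) : R :=
  epsilon (inhabits 0) (fun t => 0 <= t /\ Lap V t <= eps /\
     forall s, 0 <= s -> Lap V s <= eps -> t <= s).

Definition lamV (V : R -> R) (c : R) : R :=
  epsilon (inhabits 0) (is_glb (fun l => 0 < l /\ V l > c)).

Definition tauV (V : R -> R) (c : R) : R :=
  epsilon (inhabits 0)
    (is_lub (fun s => exists l, lamV V c <= l /\ 0 < l /\ s = ln (1 + V l) / l)).

(* Cutoff time, specialised to the standing case L_{V_n}(0) -> ∞ (so M = ∞). *)
Definition is_cutoff_time (V : nat -> R -> R) (t : nat -> R) : Prop :=
  (exists N, forall n, (N <= n)%nat -> 0 < t n) /\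
  (forall a, 1 < a -> Un_cv (fun n => Lap (V n) (a * t n)) 0) /\
  (forall a, 0 < a < 1 -> cv_infty (fun n => Lap (V n) (a * t n))).

Definition has_cutoff (V : nat -> R -> R) : Prop :=
  exists t, is_cutoff_time V t.

Definition bigO (a b : nat -> R) : Prop :=
  exists C N, forall n, (N <= n)%nat -> Rabs (a n) <= C * b n.

(* Main.v *)
Require Import Defs.
From Stdlib Require Import Reals Lra Lia ZArith Classical ClassicalEpsilon.
Open Scope R_scope.

Lemma exp_le x y : x <= y -> exp x <= exp y.
Proof. intros [H|H]. left; apply exp_increasing; auto. subst; lra. Qed.

Lemma exp_le1 x : x <= 0 -> exp x <= 1.
Proof. intros H; rewrite <- exp_0; apply exp_le; lra. Qed.

Lemma ln_le x y : 0 < x -> x <= y -> ln x <= ln y.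
Proof. intros Hx [H|H]. left; apply ln_increasing; auto. subst; lra. Qed.

Lemma exp_gt_lin x : 1 + x <= exp x.
Proof. apply exp_ineq1_le. Qed.

Section VFacts.
Variable V : R -> R.
Hypothesis hV : inV V.

Lemma V_mono : forall x y, 0 < x -> x <= y -> V x <= V y.
Proof. destruct hV as [H _]; exact H. Qed.

Lemma V_nonneg : forall y, 0 < y -> 0 <= V y.
Proof.
  intros y Hy. destruct hV as [_ [_ [H0 _]]].
  apply Rnot_lt_le; intro Hneg.
  destruct (H0 (- V y)) as [d [Hd Hd']]; [lra|].
  set (z := Rmin (y/2) (d/2)).
  assert (Hz : 0 < z < d) by (unfold z; split; [apply Rmin_pos; lra| apply Rle_lt_trans with (d/2); [apply Rmin_r|lra]]).
  assert (Hzy : z <= y) by (unfold z; apply Rle_trans with (y/2); [apply Rmin_l|lra]).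
  specialize (Hd' z Hz). pose proof (V_mono z y (proj1 Hz) Hzy).
  apply Rabs_def2 in Hd'. lra.
Qed.

Lemma V_bound : exists l, 0 <= l /\ forall y, 0 < y -> V y <= l.
Proof.
  destruct hV as [_ [_ [_ [l Hl]]]]. exists l.
  assert (Hb : forall y, 0 < y -> V y <= l).
  { intros y Hy. apply Rnot_lt_le; intro H.
    destruct (Hl (V y - l)) as [N HN]; [lra|].
    set (z := Rmax y (N+1)).
    assert (N < z) by (unfold z; apply Rlt_le_trans with (N+1); [lra|apply Rmax_r]).
    assert (y <= z) by (unfold z; apply Rmax_l).
    specialize (HN z H0). pose proof (V_mono y z Hy H1).
    apply Rabs_def2 in HN. lra. }
  split; auto. apply Rle_trans with (V 1). apply V_nonneg; lra. apply Hb; lra.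
Qed.

Lemma V_near0 : forall eps, 0 < eps -> exists d, 0 < d /\ forall y, 0 < y < d -> V y < eps.
Proof.
  intros eps He. destruct hV as [_ [_ [H0 _]]]. destruct (H0 eps He) as [d [Hd H]].
  exists d; split; auto. intros y Hy. specialize (H y Hy). apply Rabs_def2 in H. lra.
Qed.

Lemma V_rc : forall x, 0 < x -> forall eps, 0 < eps ->
     exists d, 0 < d /\ forall y, x <= y < x + d -> V y < V x + eps.
Proof.
  intros x Hx eps He. destruct hV as [_ [H _]]. destruct (H x Hx eps He) as [d [Hd H']].
  exists d; split; auto. intros y Hy. specialize (H' y Hy). apply Rabs_def2 in H'. lra.
Qed.

End VFacts.

Lemma partition_S x k : partition x (S k) -> partition x k.
Proof. intros [H0 H]; split; auto. Qed.

Lemma partition_pos x k : partition x k -> forall i, (i <= k)%nat -> 0 < x i.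
Proof.
  intros [H0 H] i. induction i; intros Hi; auto.
  apply Rlt_trans with (x i). apply IHi; lia. apply H; lia.
Qed.

Lemma partition_le x k : partition x k -> forall i, (i <= k)%nat -> x i <= x k.
Proof.
  intros [H0 H]. induction k; intros i Hi.
  - replace i with 0%nat by lia; lra.
  - destruct (Nat.eq_dec i (S k)). subst; lra.
    apply Rle_trans with (x k). apply IHk; auto. lia. left; apply H; lia.
Qed.

Section LSum.
Variable V : R -> R.
Hypothesis hV : inV V.

Lemma lsum_S t x k : lsum V t x (S k) = lsum V t x k + exp (- t * x (S k)) * (V (x (S k)) - V (x k)).
Proof. reflexivity. Qed.

Lemma incr_nonneg x k : partition x (S k) -> 0 <= V (x (S k)) - V (x k).
Proof.
  intros Hp. assert (0 < x k) by (apply (partition_pos x (S k) Hp); lia).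
  assert (x k < x (S k)) by (apply (proj2 Hp); lia).
  pose proof (V_mono V hV (x k) (x (S k)) H (Rlt_le _ _ H0)). lra.
Qed.

Lemma lsum_nonneg t x k : partition x k -> 0 <= lsum V t x k.
Proof.
  induction k; intros Hp; simpl.
  - apply Rmult_le_pos. left; apply exp_pos. apply V_nonneg; auto. apply (proj1 Hp).
  - apply Rplus_le_le_0_compat. apply IHk, partition_S; auto.
    apply Rmult_le_pos. left; apply exp_pos. apply incr_nonneg; auto.
Qed.

Lemma lsum_le_V t x k : 0 <= t -> partition x k -> lsum V t x k <= V (x k).
Proof.
  intros Ht. induction k; intros Hp; simpl.
  - assert (0 <= V (x 0%nat)) by (apply V_nonneg; auto; apply (proj1 Hp)).
    assert (exp (- t * x 0%nat) <= 1) by (apply exp_le1; pose proof (proj1 Hp); nra).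
    nra.
  - pose proof (IHk (partition_S _ _ Hp)). pose proof (incr_nonneg _ _ Hp).
    assert (0 < x (S k)) by (apply (partition_pos x (S k) Hp); lia).
    assert (exp (- t * x (S k)) <= 1) by (apply exp_le1; nra).
    nra.
Qed.

Lemma lsum_anti t1 t2 x k : t1 <= t2 -> partition x k -> lsum V t2 x k <= lsum V t1 x k.
Proof.
  intros Ht. induction k; intros Hp; simpl.
  - assert (0 <= V (x 0%nat)) by (apply V_nonneg; auto; apply (proj1 Hp)).
    assert (exp (- t2 * x 0%nat) <= exp (- t1 * x 0%nat)) by (apply exp_le; pose proof (proj1 Hp); nra).
    nra.
  - pose proof (IHk (partition_S _ _ Hp)). pose proof (incr_nonneg _ _ Hp).
    assert (0 < x (S k)) by (apply (partition_pos x (S k) Hp); lia).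
    assert (exp (- t2 * x (S k)) <= exp (- t1 * x (S k))) by (apply exp_le; nra).
    nra.
Qed.

Lemma lsum_shift t h x k : 0 <= h -> partition x k ->
  exp (- h * x k) * lsum V t x k <= lsum V (t + h) x k.
Proof.
  intros Hh. induction k; intros Hp; simpl.
  - replace (- (t + h) * x 0%nat) with (- h * x 0%nat + - t * x 0%nat) by ring.
    rewrite exp_plus; lra.
  - pose proof (IHk (partition_S _ _ Hp)). pose proof (incr_nonneg _ _ Hp).
    pose proof (lsum_nonneg t x k (partition_S _ _ Hp)).
    assert (x k < x (S k)) by (apply (proj2 Hp); lia).
    assert (exp (- h * x (S k)) <= exp (- h * x k)) by (apply exp_le; nra).
    replace (- (t + h) * x (S k)) with (- h * x (S k) + - t * x (S k)) by ring.
    rewrite exp_plus.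
    pose proof (exp_pos (- t * x (S k))). pose proof (exp_pos (- h * x (S k))).
    nra.
Qed.
End LSum.

Section LapFacts.
Variable V : R -> R.
Hypothesis hV : inV V.

Lemma Lap_lub t : 0 <= t -> is_lub (LapSums V t) (Lap V t).
Proof.
  intros Ht. unfold Lap. apply epsilon_spec.
  destruct (V_bound V hV) as [l [Hl0 Hl]].
  destruct (completeness (LapSums V t)) as [m Hm].
  - exists l. intros s [x [k [Hp ->]]].
    apply Rle_trans with (V (x k)). apply lsum_le_V; auto.
    apply Hl. apply (partition_pos x k Hp); lia.
  - exists (lsum V t (fun _ => 1) 0). exists (fun _ => 1), 0%nat. split; auto.
    split. lra. intros; lia.
  - exists m; auto.
Qed.

Lemma Lap_ge t x k : 0 <= t -> partition x k -> lsum V t x k <= Lap V t.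
Proof. intros Ht Hp. apply (proj1 (Lap_lub t Ht)). exists x, k; auto. Qed.

Lemma Lap_le t M : 0 <= t -> (forall x k, partition x k -> lsum V t x k <= M) -> Lap V t <= M.
Proof.
  intros Ht H. apply (proj2 (Lap_lub t Ht)). intros s [x [k [Hp ->]]]. auto.
Qed.

Lemma Lap_nonneg t : 0 <= t -> 0 <= Lap V t.
Proof.
  intros Ht. apply Rle_trans with (lsum V t (fun _ => 1) 0).
  apply lsum_nonneg; auto. split. lra. intros; lia.
  apply Lap_ge; auto. split. lra. intros; lia.
Qed.

Lemma Lap_lower t y : 0 <= t -> 0 < y -> exp (- t * y) * V y <= Lap V t.
Proof.
  intros Ht Hy. change (exp (- t * y) * V y) with (lsum V t (fun _ => y) 0).
  apply Lap_ge; auto. split. lra. intros; lia.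
Qed.

Lemma Lap_anti t1 t2 : 0 <= t1 -> t1 <= t2 -> Lap V t2 <= Lap V t1.
Proof.
  intros H1 H2. apply Lap_le. lra. intros x k Hp.
  apply Rle_trans with (lsum V t1 x k). apply lsum_anti; auto. apply Lap_ge; auto.
Qed.

Lemma Lap_bound l : (forall y, 0 < y -> V y <= l) -> forall t, 0 <= t -> Lap V t <= l.
Proof.
  intros Hl t Ht. apply Lap_le; auto. intros x k Hp.
  apply Rle_trans with (V (x k)). apply lsum_le_V; auto.
  apply Hl. apply (partition_pos x k Hp); lia.
Qed.

Lemma Lap0_witness c : c < Lap V 0 -> exists y, 0 < y /\ c < V y.
Proof.
  intros H. apply NNPP; intro Hn.
  assert (Lap V 0 <= c).
  { apply Lap_le. lra. intros x k Hp.
    apply Rle_trans with (V (x k)). apply lsum_le_V; auto; lra.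
    apply Rnot_lt_le; intro H'. apply Hn. exists (x k); split; auto.
    apply (partition_pos x k Hp); lia. }
  lra.
Qed.
End LapFacts.

Section Upper.
Variable V : R -> R.
Hypothesis hV : inV V.

Lemma mul_le_r a b c : 0 <= c -> a <= b -> a * c <= b * c.
Proof. intros; apply Rmult_le_compat_r; auto. Qed.

Lemma K3_lsum t s a' a B' B x k :
  0 <= t -> 0 <= s -> 0 < a' -> a' <= a -> 0 <= B' ->
  (forall y, 0 < y < a' -> V y <= B') -> (forall y, 0 < y < a -> V y <= B) ->
  partition x k ->
  lsum V (t + s) x k <= B' + exp (- t * a') * B + exp (- s * a) * lsum V t x k.
Proof.
  intros Ht Hs Ha' Haa HB' HVB' HVB.
  assert (HB : 0 <= B).
  { apply Rle_trans with (V (a'/2)). apply V_nonneg; auto; lra. apply HVB; lra. }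
  assert (Inv : forall k, partition x k ->
     (x k < a' -> lsum V (t + s) x k <= V (x k)) /\
     (a' <= x k < a -> lsum V (t + s) x k <= B' + exp (- (t + s) * a') * V (x k)) /\
     (a <= x k -> lsum V (t + s) x k <= B' + exp (- t * a') * B + exp (- s * a) * lsum V t x k)).
  { clear k. induction k; intros Hp.
    - pose proof (proj1 Hp) as Hx0. simpl.
      assert (HV0 : 0 <= V (x 0%nat)) by (apply V_nonneg; auto).
      set (y := x 0%nat) in *.
      assert (E1 : exp (- (t + s) * y) <= 1) by (apply exp_le1; nra).
      split; [|split].
      + intros _. pose proof (mul_le_r _ _ _ HV0 E1). lra.
      + intros [H1 H2].
        assert (exp (- (t + s) * y) <= exp (- (t + s) * a')) by (apply exp_le; nra).
        pose proof (mul_le_r _ _ _ HV0 H). lra.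
      + intros H1.
        replace (- (t + s) * y) with (- s * y + - t * y) by ring. rewrite exp_plus.
        assert (exp (- s * y) <= exp (- s * a)) by (apply exp_le; nra).
        pose proof (Rmult_le_pos _ _ (Rlt_le _ _ (exp_pos (- t * y))) HV0).
        pose proof (mul_le_r _ _ _ H0 H).
        pose proof (Rmult_le_pos _ _ (Rlt_le _ _ (exp_pos (- t * a'))) HB).
        rewrite Rmult_assoc. lra.
    - pose proof (IHk (partition_S _ _ Hp)) as [I1 [I2 I3]].
      pose proof (incr_nonneg V hV x k Hp) as HD.
      assert (Hy : 0 < x k) by (apply (partition_pos x (S k) Hp); lia).
      assert (Hyy : x k < x (S k)) by (apply (proj2 Hp); lia).
      pose proof (lsum_nonneg V hV t x k (partition_S _ _ Hp)) as HL.
      pose proof (V_nonneg V hV (x k) Hy) as HV0.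
      rewrite !lsum_S.
      set (y := x k) in *. set (y' := x (S k)) in *.
      set (D := V y' - V y) in *.
      assert (E1 : exp (- (t + s) * y') <= 1) by (apply exp_le1; nra).
      split; [|split].
      + intros H1. assert (y < a') by lra. specialize (I1 H).
        pose proof (mul_le_r _ _ _ HD E1). unfold D in *; lra.
      + intros [H1 H2].
        assert (E2 : exp (- (t + s) * y') <= exp (- (t + s) * a')) by (apply exp_le; nra).
        pose proof (mul_le_r _ _ _ HD E2).
        destruct (Rlt_dec y a') as [Hlt|Hge].
        * specialize (I1 Hlt). assert (V y <= B') by (apply HVB'; lra).
          assert (0 <= exp (- (t + s) * a') * V y) by (apply Rmult_le_pos; [left; apply exp_pos| auto]).
          unfold D in *. lra.
        * specialize (I2 (conj (Rnot_lt_le _ _ Hge) (Rlt_trans _ _ _ Hyy H2))).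
          unfold D in *. lra.
      + intros H1.
        assert (E3 : exp (- (t + s) * y') <= exp (- s * a) * exp (- t * y')).
        { rewrite <- exp_plus. apply exp_le. nra. }
        pose proof (mul_le_r _ _ _ HD E3) as E4.
        assert (E5 : 0 <= exp (- s * a) * lsum V t x k) by (apply Rmult_le_pos; [left; apply exp_pos|auto]).
        assert (E6 : 0 <= exp (- t * a') * B) by (apply Rmult_le_pos; [left; apply exp_pos|auto]).
        destruct (Rlt_dec y a') as [Hlt|Hge]; [|destruct (Rlt_dec y a) as [Hlt2|Hge2]].
        * specialize (I1 Hlt). assert (V y <= B') by (apply HVB'; lra).
          rewrite Rmult_plus_distr_l. rewrite <- Rmult_assoc. lra.
        * specialize (I2 (conj (Rnot_lt_le _ _ Hge) Hlt2)). assert (V y <= B) by (apply HVB; lra).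
          assert (exp (- (t + s) * a') <= exp (- t * a')) by (apply exp_le; nra).
          assert (exp (- (t + s) * a') * V y <= exp (- t * a') * B).
          { apply Rmult_le_compat; auto. left; apply exp_pos. }
          rewrite Rmult_plus_distr_l. rewrite <- Rmult_assoc. lra.
        * specialize (I3 (Rnot_lt_le _ _ Hge2)).
          rewrite Rmult_plus_distr_l. rewrite <- Rmult_assoc. lra. }
  intros Hp. destruct (Inv k Hp) as [I1 [I2 I3]].
  assert (Hy : 0 < x k) by (apply (partition_pos x k Hp); lia).
  assert (E6 : 0 <= exp (- t * a') * B) by (apply Rmult_le_pos; [left; apply exp_pos|auto]).
  pose proof (lsum_nonneg V hV t x k Hp) as HL.
  assert (E5 : 0 <= exp (- s * a) * lsum V t x k) by (apply Rmult_le_pos; [left; apply exp_pos|auto]).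
  destruct (Rlt_dec (x k) a') as [Hlt|Hge]; [|destruct (Rlt_dec (x k) a) as [Hlt2|Hge2]].
  - specialize (I1 Hlt). assert (V (x k) <= B') by (apply HVB'; lra). lra.
  - specialize (I2 (conj (Rnot_lt_le _ _ Hge) Hlt2)). assert (V (x k) <= B) by (apply HVB; lra).
    assert (exp (- (t + s) * a') <= exp (- t * a')) by (apply exp_le; nra).
    assert (exp (- (t + s) * a') * V (x k) <= exp (- t * a') * B).
    { apply Rmult_le_compat; auto. left; apply exp_pos. apply V_nonneg; auto. }
    lra.
  - apply I3; lra.
Qed.

Lemma K3_Lap t s a' a B' B :
  0 <= t -> 0 <= s -> 0 < a' -> a' <= a -> 0 <= B' ->
  (forall y, 0 < y < a' -> V y <= B') -> (forall y, 0 < y < a -> V y <= B) ->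
  Lap V (t + s) <= B' + exp (- t * a') * B + exp (- s * a) * Lap V t.
Proof.
  intros. apply Lap_le; auto. lra. intros x k Hp.
  apply Rle_trans with (B' + exp (- t * a') * B + exp (- s * a) * lsum V t x k).
  apply K3_lsum; auto.
  assert (lsum V t x k <= Lap V t) by (apply Lap_ge; auto).
  pose proof (exp_pos (- s * a)). nra.
Qed.
End Upper.

Lemma bern_exp m u : 0 <= u -> 1 - exp (- INR m * u) <= INR m * (1 - exp (- u)).
Proof.
  intros Hu. induction m.
  - simpl. replace (- 0 * u) with 0 by ring. rewrite exp_0. lra.
  - rewrite S_INR. replace (- (INR m + 1) * u) with (- INR m * u + - u) by ring.
    rewrite exp_plus.
    assert (exp (- INR m * u) <= 1) by (apply exp_le1; pose proof (pos_INR m); nra).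
    assert (exp (- u) <= 1) by (apply exp_le1; lra).
    pose proof (exp_pos (- INR m * u)). nra.
Qed.

Lemma key_step t tau m d : 0 <= t -> (1 <= m)%nat -> t <= INR m * (t - tau) -> 0 <= d ->
  1 - exp (- t * d) <= INR m * (1 - exp (- (t - tau) * d)).
Proof.
  intros Ht Hm Htm Hd.
  assert (HmR : 1 <= INR m) by (apply (le_INR 1 m) in Hm; simpl in Hm; lra).
  assert (Htt : 0 <= t - tau).
  { apply Rnot_lt_le; intro H. assert (INR m * (t - tau) < 0) by nra. lra. }
  pose proof (bern_exp m ((t - tau) * d) (Rmult_le_pos _ _ Htt Hd)).
  assert (exp (- INR m * ((t - tau) * d)) <= exp (- t * d)) by (apply exp_le; nra).
  replace (- (t - tau) * d) with (- ((t - tau) * d)) by ring. lra.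
Qed.

Section UH.
Variable V : R -> R.
Hypothesis hV : inV V.

Lemma UH_lsum t tau (m : nat) a' a B' B x k :
  0 <= t -> (1 <= m)%nat -> t <= INR m * (t - tau) ->
  0 < a' -> a' <= a -> 0 <= B' ->
  (forall y, 0 < y < a' -> V y <= B') -> (forall y, 0 < y < a -> V y <= B) ->
  (forall y, a <= y -> V y <= exp (tau * y)) ->
  partition x k ->
  lsum V t x k <= B' + exp (- t * a') * B + (INR m + 1) * exp (- (t - tau) * a).
Proof.
  intros Ht Hm Htm Ha' Haa HB' HVB' HVB HVe.
  assert (HmR : 1 <= INR m) by (apply (le_INR 1 m) in Hm; simpl in Hm; lra).
  assert (Htt : 0 <= t - tau).
  { apply Rnot_lt_le; intro H. assert (INR m * (t - tau) < 0) by nra. lra. }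
  assert (HB : 0 <= B).
  { apply Rle_trans with (V (a'/2)). apply V_nonneg; auto; lra. apply HVB; lra. }
  set (G := fun y => exp (- (t - tau) * y)).
  assert (HGa : forall y, a <= y -> G y <= G a) by (intros; unfold G; apply exp_le; nra).
  assert (Inv : forall k, partition x k ->
     (x k < a' -> lsum V t x k <= V (x k)) /\
     (a' <= x k < a -> lsum V t x k <= B' + exp (- t * a') * V (x k)) /\
     (a <= x k -> lsum V t x k <= B' + exp (- t * a') * B + exp (- t * x k) * V (x k)
                                  + INR m * (G a - G (x k)))).
  { clear k. induction k; intros Hp.
    - pose proof (proj1 Hp) as Hx0. simpl.
      assert (HV0 : 0 <= V (x 0%nat)) by (apply V_nonneg; auto).
      set (y := x 0%nat) in *.
      assert (E1 : exp (- t * y) <= 1) by (apply exp_le1; nra).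
      split; [|split].
      + intros _. pose proof (mul_le_r _ _ _ HV0 E1). lra.
      + intros [H1 H2].
        assert (exp (- t * y) <= exp (- t * a')) by (apply exp_le; nra).
        pose proof (mul_le_r _ _ _ HV0 H). lra.
      + intros H1. pose proof (HGa y H1).
        pose proof (Rmult_le_pos _ _ (Rlt_le _ _ (exp_pos (- t * a'))) HB).
        assert (0 <= INR m * (G a - G y)) by (apply Rmult_le_pos; lra). lra.
    - pose proof (IHk (partition_S _ _ Hp)) as [I1 [I2 I3]].
      pose proof (incr_nonneg V hV x k Hp) as HD.
      assert (Hy : 0 < x k) by (apply (partition_pos x (S k) Hp); lia).
      assert (Hyy : x k < x (S k)) by (apply (proj2 Hp); lia).
      pose proof (V_nonneg V hV (x k) Hy) as HV0.
      rewrite !lsum_S.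
      set (y := x k) in *. set (y' := x (S k)) in *.
      set (D := V y' - V y) in *.
      assert (HV1 : 0 <= V y') by (unfold D in HD; lra).
      assert (E1 : exp (- t * y') <= 1) by (apply exp_le1; nra).
      split; [|split].
      + intros H1. assert (y < a') by lra. specialize (I1 H).
        pose proof (mul_le_r _ _ _ HD E1). unfold D in *; lra.
      + intros [H1 H2].
        assert (E2 : exp (- t * y') <= exp (- t * a')) by (apply exp_le; nra).
        pose proof (mul_le_r _ _ _ HD E2).
        destruct (Rlt_dec y a') as [Hlt|Hge].
        * specialize (I1 Hlt). assert (V y <= B') by (apply HVB'; lra).
          assert (0 <= exp (- t * a') * V y) by (apply Rmult_le_pos; [left; apply exp_pos| auto]).
          unfold D in *. lra.
        * specialize (I2 (conj (Rnot_lt_le _ _ Hge) (Rlt_trans _ _ _ Hyy H2))).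
          unfold D in *. lra.
      + intros H1. pose proof (HGa y' H1).
        assert (HM : 0 <= INR m * (G a - G y')) by (apply Rmult_le_pos; lra).
        assert (E6 : 0 <= exp (- t * a') * B) by (apply Rmult_le_pos; [left; apply exp_pos|auto]).
        assert (E7 : 0 <= exp (- t * y') * V y) by (apply Rmult_le_pos; [left; apply exp_pos|auto]).
        destruct (Rlt_dec y a') as [Hlt|Hge]; [|destruct (Rlt_dec y a) as [Hlt2|Hge2]].
        * specialize (I1 Hlt). assert (V y <= B') by (apply HVB'; lra).
          unfold D. rewrite Rmult_minus_distr_l. lra.
        * specialize (I2 (conj (Rnot_lt_le _ _ Hge) Hlt2)). assert (V y <= B) by (apply HVB; lra).
          assert (exp (- t * a') * V y <= exp (- t * a') * B).
          { apply Rmult_le_compat_l; auto. left; apply exp_pos. }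
          unfold D. rewrite Rmult_minus_distr_l. lra.
        * specialize (I3 (Rnot_lt_le _ _ Hge2)).
          set (d := y' - y).
          assert (Hd : 0 <= d) by (unfold d; lra).
          pose proof (key_step t tau m d Ht Hm Htm Hd) as KS.
          assert (HVy : V y <= exp (tau * y)) by (apply HVe; lra).
          assert (Id1 : exp (tau * y) * exp (- t * y) = G y).
          { unfold G; rewrite <- exp_plus; f_equal; ring. }
          assert (Id2 : exp (tau * y) * exp (- t * y') = G y * exp (- t * d)).
          { unfold G, d; rewrite <- !exp_plus; f_equal; ring. }
          assert (Id3 : G y' = G y * exp (- (t - tau) * d)).
          { unfold G, d; rewrite <- !exp_plus; f_equal; ring. }
          assert (Hmon : exp (- t * y') <= exp (- t * y)) by (apply exp_le; nra).
          assert (Step : V y * (exp (- t * y) - exp (- t * y')) <= INR m * (G y - G y')).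
          { apply Rle_trans with (exp (tau * y) * (exp (- t * y) - exp (- t * y'))).
            apply mul_le_r; lra.
            rewrite Rmult_minus_distr_l, Id1, Id2, Id3.
            assert (0 < G y) by (unfold G; apply exp_pos).
            replace (G y - G y * exp (- t * d)) with (G y * (1 - exp (- t * d))) by ring.
            replace (INR m * (G y - G y * exp (- (t - tau) * d))) with (G y * (INR m * (1 - exp (- (t - tau) * d)))) by ring.
            apply Rmult_le_compat_l; lra. }
          unfold D. lra. }
  intros Hp. destruct (Inv k Hp) as [I1 [I2 I3]].
  assert (Hy : 0 < x k) by (apply (partition_pos x k Hp); lia).
  assert (E6 : 0 <= exp (- t * a') * B) by (apply Rmult_le_pos; [left; apply exp_pos|auto]).
  assert (HGp : 0 < G a) by (unfold G; apply exp_pos).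
  assert (HGy : 0 < G (x k)) by (unfold G; apply exp_pos).
  change (exp (- (t - tau) * a)) with (G a).
  destruct (Rlt_dec (x k) a') as [Hlt|Hge]; [|destruct (Rlt_dec (x k) a) as [Hlt2|Hge2]].
  - specialize (I1 Hlt). assert (V (x k) <= B') by (apply HVB'; lra).
    assert (0 <= (INR m + 1) * G a) by (apply Rmult_le_pos; lra). lra.
  - specialize (I2 (conj (Rnot_lt_le _ _ Hge) Hlt2)). assert (V (x k) <= B) by (apply HVB; lra).
    assert (exp (- t * a') * V (x k) <= exp (- t * a') * B).
    { apply Rmult_le_compat_l; auto. left; apply exp_pos. }
    assert (0 <= (INR m + 1) * G a) by (apply Rmult_le_pos; lra). lra.
  - assert (Ha : a <= x k) by lra. specialize (I3 Ha).
    assert (exp (- t * x k) * V (x k) <= G (x k)).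
    { apply Rle_trans with (exp (- t * x k) * exp (tau * x k)).
      apply Rmult_le_compat_l. left; apply exp_pos. apply HVe; lra.
      unfold G; rewrite <- exp_plus; right; f_equal; ring. }
    pose proof (HGa (x k) Ha).
    assert (INR m * (G a - G (x k)) <= INR m * G a) by (apply Rmult_le_compat_l; lra).
    lra.
Qed.

Lemma UH_Lap t tau (m : nat) a' a B' B :
  0 <= t -> (1 <= m)%nat -> t <= INR m * (t - tau) ->
  0 < a' -> a' <= a -> 0 <= B' ->
  (forall y, 0 < y < a' -> V y <= B') -> (forall y, 0 < y < a -> V y <= B) ->
  (forall y, a <= y -> V y <= exp (tau * y)) ->
  Lap V t <= B' + exp (- t * a') * B + (INR m + 1) * exp (- (t - tau) * a).
Proof.
  intros. apply Lap_le; auto. intros x k Hp. eapply UH_lsum; eauto.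
Qed.
End UH.

Lemma exp_small K d y : 0 <= K -> 0 < d -> K / d <= y -> K * exp (- y) < d.
Proof.
  intros HK Hd Hy. rewrite exp_Ropp. pose proof (exp_gt_lin y). pose proof (exp_pos y).
  assert (K <= d * y).
  { replace K with (d * (K/d)) by (field; lra). apply Rmult_le_compat_l; lra. }
  apply Rmult_lt_reg_r with (exp y); auto. rewrite Rmult_assoc, Rinv_l; [|lra].
  assert (d * (1 + y) <= d * exp y) by (apply Rmult_le_compat_l; lra). lra.
Qed.

Lemma glb_exists (E : R -> Prop) : (exists x, E x) -> (forall x, E x -> 0 <= x) -> exists m, is_glb E m.
Proof.
  intros [x0 Hx0] Hlb.
  destruct (completeness (fun y => E (- y))) as [m [Hm1 Hm2]].
  - exists 0. intros y Hy. specialize (Hlb _ Hy). lra.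
  - exists (- x0). rewrite Ropp_involutive; auto.
  - exists (- m). split.
    + intros x Hx. assert (- x <= m) by (apply Hm1; rewrite Ropp_involutive; auto). lra.
    + intros b Hb. assert (m <= - b).
      { apply Hm2. intros y Hy. specialize (Hb _ Hy). lra. } lra.
Qed.

Section TmixLam.
Variable V : R -> R.
Hypothesis hV : inV V.

Lemma Lap_small eps : 0 < eps -> exists t, 0 <= t /\ Lap V t <= eps.
Proof.
  intros He. destruct (V_near0 V hV (eps/2)) as [d [Hd HVd]]; [lra|].
  destruct (V_bound V hV) as [l [Hl0 Hl]].
  set (u := ((eps/2 + l) / (eps/2)) / d).
  assert (Hu : 0 <= u) by (unfold u; apply Rmult_le_pos; [apply Rmult_le_pos|]; try lra;
     left; apply Rinv_0_lt_compat; lra).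
  exists (u + u). split. lra.
  assert (HV' : forall y, 0 < y < d -> V y <= eps/2) by (intros y Hy; left; apply HVd; auto).
  pose proof (K3_Lap V hV u u d d (eps/2) (eps/2) Hu Hu Hd (Rle_refl _) ltac:(lra) HV' HV') as H.
  pose proof (Lap_bound V hV l Hl u Hu) as HL.
  assert (Hsm : (eps/2 + l) * exp (- (u * d)) < eps/2).
  { apply exp_small; try lra. unfold u. right. field. lra. }
  replace (- u * d) with (- (u * d)) in H by ring.
  pose proof (exp_pos (- (u * d))). nra.
Qed.

Lemma Tmix_spec eps : 0 < eps ->
  0 <= Tmix V eps /\ Lap V (Tmix V eps) <= eps /\
  forall s, 0 <= s -> Lap V s <= eps -> Tmix V eps <= s.
Proof.
  intros He. unfold Tmix. apply epsilon_spec.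
  set (S := fun t => 0 <= t /\ Lap V t <= eps).
  destruct (glb_exists S) as [ts [Hts1 Hts2]].
  - destruct (Lap_small eps He) as [t Ht]; exists t; exact Ht.
  - intros x [Hx _]; auto.
  - assert (H0 : 0 <= ts) by (apply Hts2; intros x [Hx _]; auto).
    exists ts. split; auto. split.
    + apply Lap_le; auto. intros x k Hp. apply Rnot_lt_le; intro HL.
      set (L := lsum V ts x k) in *. set (X := x k).
      assert (HX : 0 < X) by (apply (partition_pos x k Hp); lia).
      set (h := (L - eps) / (2 * L * X)).
      assert (Hh : 0 < h) by (unfold h; apply Rdiv_lt_0_compat; [lra| apply Rmult_lt_0_compat; lra]).
      assert (Hnot : ~ (forall y, S y -> ts + h <= y)).
      { intro Hc. specialize (Hts2 _ Hc). lra. }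
      apply Hnot. intros y [Hy1 Hy2]. apply Rnot_lt_le; intro Hlt.
      assert (ts <= y) by (apply Hts1; split; auto).
      assert (Lap V (ts + h) <= eps).
      { apply Rle_trans with (Lap V y); auto. apply Lap_anti; auto. lra. }
      pose proof (lsum_shift V hV ts h x k (Rlt_le _ _ Hh) Hp) as Hsh.
      pose proof (Lap_ge V hV (ts + h) x k ltac:(lra) Hp).
      pose proof (exp_gt_lin (- h * X)).
      assert (Hhx : h * X = (L - eps) / (2 * L)) by (unfold h; field; split; lra).
      fold X in Hsh. fold L in Hsh.
      assert ((1 + - h * X) * L <= exp (- h * X) * L) by (apply mul_le_r; lra).
      assert ((1 - h * X) * L = (L + eps) / 2) by (rewrite Hhx; field; lra).
      nra.
    + intros s Hs HL. apply Hts1. split; auto.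
Qed.

Lemma Tmix_le eps s : 0 < eps -> 0 <= s -> Lap V s <= eps -> Tmix V eps <= s.
Proof. intros. apply (Tmix_spec eps H); auto. Qed.

Lemma Tmix_gt eps s : 0 < eps -> 0 <= s -> eps < Lap V s -> s < Tmix V eps.
Proof.
  intros He Hs HL. destruct (Tmix_spec eps He) as [H0 [H1 _]].
  apply Rnot_le_lt; intro H. assert (Lap V s <= Lap V (Tmix V eps)) by (apply Lap_anti; auto). lra.
Qed.

Lemma Tmix_nonneg eps : 0 < eps -> 0 <= Tmix V eps.
Proof. intros He; apply (Tmix_spec eps He). Qed.

Lemma Tmix_anti eps delta : 0 < eps -> eps <= delta -> Tmix V delta <= Tmix V eps.
Proof.
  intros He Hed. destruct (Tmix_spec eps He) as [H0 [H1 _]].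
  apply Tmix_le; auto; lra.
Qed.

Definition Wit c := exists y, 0 < y /\ c < V y.

Lemma lam_glb c : 0 < c -> Wit c -> is_glb (fun l => 0 < l /\ V l > c) (lamV V c).
Proof.
  intros Hc Hw. unfold lamV. apply epsilon_spec.
  apply glb_exists. destruct Hw as [y [Hy1 Hy2]]. exists y; split; auto.
  intros x [Hx _]; lra.
Qed.

Lemma lam_pos c : 0 < c -> Wit c -> 0 < lamV V c.
Proof.
  intros Hc Hw. destruct (V_near0 V hV c Hc) as [d [Hd HVd]].
  apply Rlt_le_trans with d; auto. apply (proj2 (lam_glb c Hc Hw)).
  intros x [Hx1 Hx2]. apply Rnot_lt_le; intro H. specialize (HVd x (conj Hx1 H)). lra.
Qed.

Lemma lam_below c y : 0 < c -> Wit c -> 0 < y -> y < lamV V c -> V y <= c.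
Proof.
  intros Hc Hw Hy Hyl. apply Rnot_lt_le; intro H.
  assert (lamV V c <= y) by (apply (proj1 (lam_glb c Hc Hw)); split; auto). lra.
Qed.

Lemma lam_at c : 0 < c -> Wit c -> c <= V (lamV V c).
Proof.
  intros Hc Hw. pose proof (lam_pos c Hc Hw) as Hl. set (L := lamV V c) in *.
  apply Rnot_lt_le; intro H.
  destruct (V_rc V hV L Hl (c - V L)) as [d [Hd Hrc]]; [lra|].
  assert (L + d <= L).
  { apply (proj2 (lam_glb c Hc Hw)). intros y [Hy1 Hy2].
    apply Rnot_lt_le; intro Hlt.
    assert (L <= y) by (apply (proj1 (lam_glb c Hc Hw)); split; auto).
    specialize (Hrc y (conj H0 Hlt)). lra. }
  lra.
Qed.

Lemma lam_mono c c' : 0 < c -> c <= c' -> Wit c' -> lamV V c <= lamV V c'.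
Proof.
  intros Hc Hcc Hw. assert (Hw' : Wit c) by (destruct Hw as [y [H1 H2]]; exists y; split; auto; lra).
  apply (proj2 (lam_glb c' ltac:(lra) Hw)). intros y [H1 H2].
  apply (proj1 (lam_glb c Hc Hw')). split; auto. lra.
Qed.

Definition Tset c := fun s => exists l, lamV V c <= l /\ 0 < l /\ s = ln (1 + V l) / l.

Lemma tau_lub c : 0 < c -> Wit c -> is_lub (Tset c) (tauV V c).
Proof.
  intros Hc Hw. unfold tauV. apply epsilon_spec.
  pose proof (lam_pos c Hc Hw) as Hl.
  destruct (V_bound V hV) as [L [HL0 HL]].
  destruct (completeness (Tset c)) as [m Hm].
  - exists (ln (1 + L) / lamV V c). intros s [y [Hy1 [Hy2 ->]]].
    pose proof (V_nonneg V hV y Hy2).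
    assert (ln (1 + V y) <= ln (1 + L)) by (apply ln_le; [lra| pose proof (HL y Hy2); lra]).
    assert (0 <= ln (1 + V y)) by (rewrite <- ln_1; apply ln_le; lra).
    assert (/ y <= / lamV V c) by (apply Rinv_le_contravar; auto).
    unfold Rdiv. apply Rmult_le_compat; auto. left; apply Rinv_0_lt_compat; auto.
  - exists (ln (1 + V (lamV V c)) / lamV V c). exists (lamV V c). repeat split; auto; lra.
  - exists m; auto.
Qed.

Lemma tau_nonneg c : 0 < c -> Wit c -> 0 <= tauV V c.
Proof.
  intros Hc Hw. pose proof (lam_pos c Hc Hw) as Hl.
  apply Rle_trans with (ln (1 + V (lamV V c)) / lamV V c).
  - pose proof (V_nonneg V hV _ Hl).
    assert (0 <= ln (1 + V (lamV V c))) by (rewrite <- ln_1; apply ln_le; lra).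
    unfold Rdiv; apply Rmult_le_pos; auto. left; apply Rinv_0_lt_compat; auto.
  - apply (proj1 (tau_lub c Hc Hw)). exists (lamV V c). repeat split; auto; lra.
Qed.

Lemma tau_Vbound c y : 0 < c -> Wit c -> lamV V c <= y -> V y <= exp (tauV V c * y).
Proof.
  intros Hc Hw Hy. pose proof (lam_pos c Hc Hw) as Hl.
  assert (Hy0 : 0 < y) by lra.
  assert (ln (1 + V y) / y <= tauV V c) by (apply (proj1 (tau_lub c Hc Hw)); exists y; repeat split; auto; lra).
  assert (ln (1 + V y) <= tauV V c * y).
  { apply Rmult_le_compat_r with (r := y) in H; [|lra]. unfold Rdiv in H.
    rewrite Rmult_assoc, Rinv_l in H; lra. }
  pose proof (V_nonneg V hV y Hy0).
  assert (1 + V y <= exp (tauV V c * y)).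
  { rewrite <- (exp_ln (1 + V y)); [|lra]. apply exp_le; auto. }
  lra.
Qed.

Lemma tau_approx c eta : 0 < c -> Wit c -> 0 < eta ->
  exists y, lamV V c <= y /\ 0 < y /\ exp ((tauV V c - eta) * y) - 1 <= V y.
Proof.
  intros Hc Hw He. pose proof (lam_pos c Hc Hw) as Hl.
  destruct (tau_lub c Hc Hw) as [H1 H2].
  apply NNPP; intro Hn.
  assert (tauV V c <= tauV V c - eta); [|lra].
  apply H2. intros s [y [Hy1 [Hy2 ->]]].
  apply Rnot_lt_le; intro Hlt. apply Hn. exists y; repeat split; auto.
  assert ((tauV V c - eta) * y < ln (1 + V y)).
  { apply Rmult_lt_compat_r with (r := y) in Hlt; auto. unfold Rdiv in Hlt.
    rewrite Rmult_assoc, Rinv_l in Hlt; lra. }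
  pose proof (V_nonneg V hV y Hy2).
  assert (exp ((tauV V c - eta) * y) <= 1 + V y).
  { rewrite <- (exp_ln (1 + V y)); [|lra]. apply exp_le; lra. }
  lra.
Qed.

Lemma tau_le_max c ct : 0 < c -> c <= ct -> Wit ct ->
  tauV V c <= Rmax (ln (1 + ct) / lamV V c) (tauV V ct).
Proof.
  intros Hc Hcc Hw. assert (Hw' : Wit c) by (destruct Hw as [y [H1 H2]]; exists y; split; auto; lra).
  pose proof (lam_pos c Hc Hw') as Hl.
  apply (proj2 (tau_lub c Hc Hw')). intros s [y [Hy1 [Hy2 ->]]].
  destruct (Rle_dec (lamV V ct) y) as [Hge|Hlt].
  - apply Rle_trans with (tauV V ct); [|apply Rmax_r].
    apply (proj1 (tau_lub ct ltac:(lra) Hw)). exists y; repeat split; auto.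
  - apply Rle_trans with (ln (1 + ct) / lamV V c); [|apply Rmax_l].
    assert (V y <= ct) by (apply lam_below; auto; lra).
    pose proof (V_nonneg V hV y Hy2).
    assert (ln (1 + V y) <= ln (1 + ct)) by (apply ln_le; lra).
    assert (0 <= ln (1 + V y)) by (rewrite <- ln_1; apply ln_le; lra).
    assert (/ y <= / lamV V c) by (apply Rinv_le_contravar; auto).
    unfold Rdiv. apply Rmult_le_compat; auto. left; apply Rinv_0_lt_compat; auto.
Qed.
End TmixLam.

Lemma nat_between r : 0 <= r -> exists m : nat, (1 <= m)%nat /\ r <= INR m <= r + 1.
Proof.
  intros Hr. destruct (archimed r) as [H1 H2].
  assert (Hz : (0 <= up r)%Z) by (apply le_IZR; lra).
  exists (Z.to_nat (up r)). rewrite INR_IZR_INZ, Z2Nat.id; auto.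
  split; [|lra].
  destruct (Z.to_nat (up r)) eqn:E; [|lia].
  exfalso. assert (up r = 0%Z) by lia. rewrite H in H1. simpl in H1. lra.
Qed.

Lemma lin_exp_small x d : 0 <= x -> 0 < d -> 6 / d <= x -> (x + 3) * exp (- x) < d.
Proof.
  intros Hx Hd Hxd.
  assert (He : exp x = exp (x/2) * exp (x/2)) by (rewrite <- exp_plus; f_equal; field).
  pose proof (exp_gt_lin (x/2)).
  assert (Hq : (1 + x/2) * (1 + x/2) <= exp x) by (rewrite He; apply Rmult_le_compat; lra).
  rewrite exp_Ropp. pose proof (exp_pos x).
  apply Rmult_lt_reg_r with (exp x); auto. rewrite Rmult_assoc, Rinv_l; [|lra].
  assert (6 <= d * x) by (replace 6 with (d * (6/d)) by (field; lra); apply Rmult_le_compat_l; lra).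
  assert ((x + 3) * 1 < d * ((1 + x/2) * (1 + x/2))) by nra.
  assert (d * ((1 + x/2) * (1 + x/2)) <= d * exp x) by (apply Rmult_le_compat_l; lra).
  lra.
Qed.

Definition ev (P : nat -> Prop) := exists N, forall n, (N <= n)%nat -> P n.

Lemma ev_and P Q : ev P -> ev Q -> ev (fun n => P n /\ Q n).
Proof.
  intros [N1 H1] [N2 H2]. exists (N1 + N2)%nat. intros n Hn. split; [apply H1|apply H2]; lia.
Qed.

Lemma ev_imp (P Q : nat -> Prop) : ev P -> (forall n, P n -> Q n) -> ev Q.
Proof. intros [N H] HPQ. exists N; auto. Qed.

Lemma cv_ev u : cv_infty u -> forall M, ev (fun n => M < u n).
Proof. intros H M. destruct (H M) as [N HN]. exists N; auto. Qed.

Lemma ev_cv u : (forall M, ev (fun n => M < u n)) -> cv_infty u.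
Proof. intros H M. destruct (H M) as [N HN]. exists N; auto. Qed.

Lemma Un_ev u : Un_cv u 0 -> forall d, 0 < d -> ev (fun n => u n < d).
Proof.
  intros H d Hd. destruct (H d Hd) as [N HN]. exists N. intros n Hn.
  specialize (HN n Hn). unfold Rdist in HN. apply Rabs_def2 in HN. lra.
Qed.

Lemma ev_Un u : (forall d, 0 < d -> ev (fun n => 0 <= u n /\ u n < d)) -> Un_cv u 0.
Proof.
  intros H d Hd. destruct (H d Hd) as [N HN]. exists N. intros n Hn.
  destruct (HN n Hn) as [H1 H2].
  unfold Rdist. rewrite Rminus_0_r, Rabs_right; lra.
Qed.

Section Seq.
Variable V : nat -> R -> R.
Hypothesis hV : forall n, inV (V n).
Hypothesis h0 : cv_infty (fun n => Lap (V n) 0).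

Lemma ev_wit c : ev (fun n => Wit (V n) c).
Proof.
  destruct (cv_ev _ h0 c) as [N HN]. exists N. intros n Hn.
  apply Lap0_witness; auto.
Qed.

Definition Good ct := forall c, 0 < c -> cv_infty (fun n => tauV (V n) ct * lamV (V n) c).

Lemma cutoff_tlam t : is_cutoff_time V t -> forall c, 0 < c -> cv_infty (fun n => t n * lamV (V n) c).
Proof.
  intros [Ht [Ha _]] c Hc. apply ev_cv. intros M. set (M' := Rmax M 0).
  assert (HM : M <= M' /\ 0 <= M') by (split; [apply Rmax_l|apply Rmax_r]).
  pose proof (Un_ev _ (Ha 2 ltac:(lra)) (c * exp (- (2 * M'))) (Rmult_lt_0_compat _ _ Hc (exp_pos _))) as E1.
  apply (ev_imp _ _ (ev_and _ _ E1 (ev_and _ _ Ht (ev_wit c)))).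
  intros n [H1 [H2 Hw]].
  pose proof (lam_pos _ (hV n) c Hc Hw) as Hl.
  pose proof (lam_at _ (hV n) c Hc Hw) as Hat.
  pose proof (Lap_lower _ (hV n) (2 * t n) (lamV (V n) c) ltac:(lra) Hl) as Hlow.
  assert (exp (- (2 * t n) * lamV (V n) c) * c <= exp (- (2 * t n) * lamV (V n) c) * V n (lamV (V n) c))
    by (apply Rmult_le_compat_l; auto; left; apply exp_pos).
  assert (exp (- (2 * t n) * lamV (V n) c) < exp (- (2 * M'))).
  { apply Rmult_lt_reg_r with c; auto. lra. }
  apply exp_lt_inv in H0. lra.
Qed.

Lemma cutoff_P2 t : is_cutoff_time V t -> forall eps c, 0 < eps -> 0 < c ->
  cv_infty (fun n => Tmix (V n) eps * lamV (V n) c).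
Proof.
  intros Hcut eps c He Hc. pose proof (cutoff_tlam t Hcut c Hc) as HB.
  destruct Hcut as [Ht [_ Hb]].
  apply ev_cv. intros M. set (M' := Rmax M 0).
  assert (HM : M <= M' /\ 0 <= M') by (split; [apply Rmax_l|apply Rmax_r]).
  pose proof (cv_ev _ (Hb (1/2) ltac:(lra)) eps) as E1.
  pose proof (cv_ev _ HB (2 * M')) as E2.
  apply (ev_imp _ _ (ev_and _ _ E1 (ev_and _ _ E2 (ev_and _ _ Ht (ev_wit c))))).
  intros n [H1 [H2 [H3 Hw]]].
  pose proof (lam_pos _ (hV n) c Hc Hw) as Hl.
  assert (1/2 * t n < Tmix (V n) eps) by (apply Tmix_gt; auto; lra).
  assert (1/2 * t n * lamV (V n) c <= Tmix (V n) eps * lamV (V n) c) by (apply Rmult_le_compat_r; lra).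
  lra.
Qed.

Lemma cutoff_P4 t : is_cutoff_time V t -> forall c, 0 < c ->
  cv_infty (fun n => tauV (V n) c * lamV (V n) c).
Proof.
  intros Hcut c Hc. pose proof (cutoff_tlam t Hcut c Hc) as HB.
  destruct Hcut as [Ht [_ Hb]].
  apply ev_cv. intros M. set (M' := Rmax M 0).
  assert (HM : M <= M' /\ 0 <= M') by (split; [apply Rmax_l|apply Rmax_r]).
  pose proof (cv_ev _ (Hb (1/2) ltac:(lra)) (2 * c + 3)) as E1.
  pose proof (cv_ev _ HB (4 * M')) as E2.
  apply (ev_imp _ _ (ev_and _ _ E1 (ev_and _ _ E2 (ev_and _ _ Ht (ev_wit c))))).
  intros n [H1 [H2 [H3 Hw]]].
  pose proof (lam_pos _ (hV n) c Hc Hw) as Hl.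
  assert (Htau : t n / 4 < tauV (V n) c).
  { apply Rnot_le_lt; intro Hle.
    assert (Hup := UH_Lap (V n) (hV n) (1/2 * t n) (tauV (V n) c) 2 (lamV (V n) c) (lamV (V n) c) c c
      ltac:(lra) ltac:(lia) ltac:(simpl; lra) Hl (Rle_refl _) ltac:(lra)
      (fun y Hy => lam_below (V n) c y Hc Hw (proj1 Hy) (proj2 Hy))
      (fun y Hy => lam_below (V n) c y Hc Hw (proj1 Hy) (proj2 Hy))
      (fun y Hy => tau_Vbound _ (hV n) c y Hc Hw Hy)).
    assert (exp (- (1/2 * t n) * lamV (V n) c) <= 1) by (apply exp_le1; nra).
    assert (exp (- (1/2 * t n - tauV (V n) c) * lamV (V n) c) <= 1) by (apply exp_le1; nra).
    simpl in Hup. nra. }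
  assert (t n / 4 * lamV (V n) c <= tauV (V n) c * lamV (V n) c) by (apply Rmult_le_compat_r; lra).
  lra.
Qed.

Lemma diag_good ct : 0 < ct -> (forall c, 0 < c -> c <= ct -> cv_infty (fun n => tauV (V n) c * lamV (V n) c)) ->
  Good ct.
Proof.
  intros Hct H c Hc. apply ev_cv. intros M.
  destruct (Rle_dec ct c) as [Hge|Hlt].
  - pose proof (cv_ev _ (H ct Hct (Rle_refl _)) M) as E1.
    apply (ev_imp _ _ (ev_and _ _ E1 (ev_wit c))). intros n [H1 Hw].
    assert (Hw' : Wit (V n) ct) by (destruct Hw as [y [Hy1 Hy2]]; exists y; split; auto; lra).
    pose proof (lam_mono (V n) ct c Hct Hge Hw).
    pose proof (tau_nonneg _ (hV n) ct Hct Hw').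
    assert (tauV (V n) ct * lamV (V n) ct <= tauV (V n) ct * lamV (V n) c) by (apply Rmult_le_compat_l; auto).
    lra.
  - pose proof (cv_ev _ (H c Hc ltac:(lra)) (Rmax M (ln (1 + ct)))) as E1.
    apply (ev_imp _ _ (ev_and _ _ E1 (ev_wit ct))). intros n [H1 Hw].
    pose proof (lam_pos _ (hV n) c Hc (ltac:(destruct Hw as [y [Hy1 Hy2]]; exists y; split; auto; lra) : Wit (V n) c)) as Hl.
    pose proof (tau_le_max _ (hV n) c ct Hc ltac:(lra) Hw) as Hm.
    apply Rnot_le_lt; intro Hle.
    assert (Hmx : M <= Rmax M (ln (1 + ct)) /\ ln (1 + ct) <= Rmax M (ln (1 + ct))) by (split; [apply Rmax_l|apply Rmax_r]).
    revert Hm. unfold Rmax at 1. destruct (Rle_dec (ln (1 + ct) / lamV (V n) c) (tauV (V n) ct)); intro Hm.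
    + assert (tauV (V n) c * lamV (V n) c <= tauV (V n) ct * lamV (V n) c) by (apply Rmult_le_compat_r; lra). lra.
    + assert (tauV (V n) c * lamV (V n) c <= ln (1 + ct) / lamV (V n) c * lamV (V n) c) by (apply Rmult_le_compat_r; lra).
      replace (ln (1 + ct) / lamV (V n) c * lamV (V n) c) with (ln (1 + ct)) in H0 by (field; lra). lra.
Qed.

Lemma good_cutoff ct : 0 < ct -> Good ct -> is_cutoff_time V (fun n => tauV (V n) ct).
Proof.
  intros Hct HG. split; [|split].
  - pose proof (cv_ev _ (HG ct Hct) 0) as E1.
    apply (ev_imp _ _ (ev_and _ _ E1 (ev_wit ct))). intros n [H1 Hw].
    pose proof (lam_pos _ (hV n) ct Hct Hw). pose proof (tau_nonneg _ (hV n) ct Hct Hw).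
    destruct H0; auto. rewrite <- H0 in H1. lra.
  - intros a Ha. apply ev_Un. intros d Hd.
    set (c := Rmin (d/4) ct).
    assert (Hc : 0 < c) by (unfold c; apply Rmin_pos; lra).
    assert (Hc1 : c <= d/4) by apply Rmin_l. assert (Hc2 : c <= ct) by apply Rmin_r.
    destruct (nat_between (a / (a - 1))) as [m [Hm1 [Hm2 Hm3]]].
    { apply Rlt_le, Rdiv_lt_0_compat; lra. }
    assert (Ham : a <= INR m * (a - 1)).
    { replace a with (a / (a - 1) * (a - 1)) at 1 by (field; lra). apply Rmult_le_compat_r; lra. }
    pose proof (cv_ev _ (HG c Hc) (ct / (d/4))) as E1.
    pose proof (cv_ev _ (HG ct Hct) ((INR m + 1) / (d/4) / (a - 1))) as E2.
    apply (ev_imp _ _ (ev_and _ _ E1 (ev_and _ _ E2 (ev_wit ct)))).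
    intros n [H1 [H2 Hw]].
    assert (Hwc : Wit (V n) c) by (destruct Hw as [y [Hy1 Hy2]]; exists y; split; auto; lra).
    pose proof (lam_pos _ (hV n) c Hc Hwc) as Hlc.
    pose proof (lam_pos _ (hV n) ct Hct Hw) as Hlct.
    pose proof (lam_mono (V n) c ct Hc Hc2 Hw) as Hmono.
    pose proof (tau_nonneg _ (hV n) ct Hct Hw) as Htau.
    set (tau := tauV (V n) ct) in *.
    split. apply Lap_nonneg; auto; nra.
    assert (Hcond : a * tau <= INR m * (a * tau - tau)).
    { replace (a * tau - tau) with ((a - 1) * tau) by ring. nra. }
    pose proof (UH_Lap (V n) (hV n) (a * tau) tau m (lamV (V n) c) (lamV (V n) ct) c ct
      ltac:(nra) Hm1 Hcond Hlc Hmono ltac:(lra)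
      (fun y Hy => lam_below (V n) c y Hc Hwc (proj1 Hy) (proj2 Hy))
      (fun y Hy => lam_below (V n) ct y Hct Hw (proj1 Hy) (proj2 Hy))
      (fun y Hy => tau_Vbound _ (hV n) ct y Hct Hw Hy)) as Hup.
    assert (T1 : exp (- (a * tau) * lamV (V n) c) * ct < d / 4).
    { apply Rle_lt_trans with (ct * exp (- (tau * lamV (V n) c))).
      rewrite Rmult_comm. apply Rmult_le_compat_l. lra. apply exp_le.
      assert (tau * lamV (V n) c <= a * tau * lamV (V n) c) by (apply Rmult_le_compat_r; nra). lra.
      apply exp_small; lra. }
    assert (T2 : (INR m + 1) * exp (- (a * tau - tau) * lamV (V n) ct) < d / 4).
    { replace (- (a * tau - tau) * lamV (V n) ct) with (- ((a - 1) * (tau * lamV (V n) ct))) by ring.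
      apply exp_small. pose proof (pos_INR m); lra. lra.
      apply Rmult_lt_compat_l with (r := a - 1) in H2; [|lra].
      replace ((a - 1) * ((INR m + 1) / (d / 4) / (a - 1))) with ((INR m + 1) / (d / 4)) in H2 by (field; lra).
      lra. }
    lra.
  - intros a Ha. apply ev_cv. intros M. set (M' := Rmax M 0).
    assert (HM : M <= M' /\ 0 <= M') by (split; [apply Rmax_l|apply Rmax_r]).
    pose proof (cv_ev _ (HG ct Hct) (2 * M' / (1 - a))) as E1.
    apply (ev_imp _ _ (ev_and _ _ E1 (ev_wit ct))). intros n [H1 Hw].
    pose proof (lam_pos _ (hV n) ct Hct Hw) as Hl.
    pose proof (tau_nonneg _ (hV n) ct Hct Hw) as Htau0.
    set (tau := tauV (V n) ct) in *. set (lam := lamV (V n) ct) in *.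
    assert (Hq : 0 <= 2 * M' / (1 - a)) by (apply Rmult_le_pos; [lra| left; apply Rinv_0_lt_compat; lra]).
    assert (Htau : 0 < tau).
    { destruct Htau0 as [Hp|He]; auto. rewrite <- He in H1. lra. }
    destruct (tau_approx _ (hV n) ct ((1 - a) * tau / 2) Hct Hw ltac:(nra)) as [y [Hy1 [Hy2 Hy3]]].
    fold tau lam in Hy1, Hy3.
    pose proof (Lap_lower _ (hV n) (a * tau) y ltac:(nra) Hy2) as Hlow.
    assert (Hp : exp (- (a * tau) * y) * (exp ((tau - (1 - a) * tau / 2) * y) - 1) <= exp (- (a * tau) * y) * V n y)
      by (apply Rmult_le_compat_l; [left; apply exp_pos | auto]).
    assert (Hid : exp (- (a * tau) * y) * (exp ((tau - (1 - a) * tau / 2) * y) - 1)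
                  = exp ((1 - a) * tau / 2 * y) - exp (- (a * tau) * y)).
    { rewrite Rmult_minus_distr_l, Rmult_1_r, <- exp_plus.
      assert (Hex : - (a * tau) * y + (tau - (1 - a) * tau / 2) * y = (1 - a) * tau / 2 * y) by field. rewrite Hex. reflexivity. }
    pose proof (exp_gt_lin ((1 - a) * tau / 2 * y)).
    assert (exp (- (a * tau) * y) <= 1) by (apply exp_le1; assert (0 < a * tau) by (apply Rmult_lt_0_compat; lra); nra).
    assert (Hyl : (1 - a) * tau / 2 * lam <= (1 - a) * tau / 2 * y) by (apply Rmult_le_compat_l; nra).
    apply Rmult_lt_compat_l with (r := (1 - a) / 2) in H1; [|lra].
    replace ((1 - a) / 2 * (2 * M' / (1 - a))) with M' in H1 by (field; lra).
    assert ((1 - a) / 2 * (tau * lam) = (1 - a) * tau / 2 * lam) by (field).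
    lra.
Qed.

Lemma tauT eps : 0 < eps -> (forall c, 0 < c -> cv_infty (fun n => Tmix (V n) eps * lamV (V n) c)) ->
  forall c, 0 < c -> c < eps -> cv_infty (fun n => tauV (V n) c * lamV (V n) c).
Proof.
  intros He HT c Hc Hce. apply ev_cv. intros M. set (M' := Rmax M 0).
  assert (HM : M <= M' /\ 0 <= M') by (split; [apply Rmax_l|apply Rmax_r]).
  set (g := (eps - c) / 2). assert (Hg : 0 < g) by (unfold g; lra).
  set (K := 2 * (c / g) + 12 / g + 4 * M' + 1).
  assert (HK : 4 * M' + 1 <= K /\ 2 * (c / g) <= K /\ 12 / g <= K /\ 0 <= c / g /\ 0 <= 12 / g).
  { assert (0 <= c / g) by (apply Rmult_le_pos; [lra| left; apply Rinv_0_lt_compat; lra]).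
    assert (0 <= 12 / g) by (apply Rmult_le_pos; [lra| left; apply Rinv_0_lt_compat; lra]).
    unfold K; lra. }
  pose proof (cv_ev _ (HT c Hc) K) as E1.
  apply (ev_imp _ _ (ev_and _ _ E1 (ev_wit c))). intros n [H1 Hw].
  pose proof (lam_pos _ (hV n) c Hc Hw) as Hl.
  pose proof (Tmix_nonneg _ (hV n) eps He) as HT0.
  set (T := Tmix (V n) eps) in *. set (lam := lamV (V n) c) in *.
  assert (HTp : 0 < T).
  { destruct HT0 as [Hp|Hz]; auto. rewrite <- Hz in H1. lra. }
  assert (HL : eps < Lap (V n) (1/2 * T)).
  { apply Rnot_le_lt; intro Hle. pose proof (Tmix_le _ (hV n) eps (1/2 * T) He ltac:(lra) Hle). fold T in H. lra. }
  assert (Htau : T / 4 < tauV (V n) c).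
  { apply Rnot_le_lt; intro Hle.
    assert (Hup := UH_Lap (V n) (hV n) (1/2 * T) (tauV (V n) c) 2 lam lam c c
      ltac:(lra) ltac:(lia) ltac:(simpl; lra) Hl (Rle_refl _) ltac:(lra)
      (fun y Hy => lam_below (V n) c y Hc Hw (proj1 Hy) (proj2 Hy))
      (fun y Hy => lam_below (V n) c y Hc Hw (proj1 Hy) (proj2 Hy))
      (fun y Hy => tau_Vbound _ (hV n) c y Hc Hw Hy)).
    assert (S1 : exp (- (1/2 * T) * lam) * c < g).
    { rewrite Rmult_comm. replace (- (1/2 * T) * lam) with (- (T * lam / 2)) by field.
      apply exp_small; lra. }
    assert (S2 : (INR 2 + 1) * exp (- (1/2 * T - tauV (V n) c) * lam) < g).
    { replace (INR 2 + 1) with 3 by (simpl; lra). apply Rle_lt_trans with (3 * exp (- (T * lam / 4))).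
      assert (exp (- (1/2 * T - tauV (V n) c) * lam) <= exp (- (T * lam / 4))) by (apply exp_le; nra).
      pose proof (exp_pos (- (1/2 * T - tauV (V n) c) * lam)). lra.
      apply exp_small; lra. }
    assert (eps = c + 2 * g) by (unfold g; field). lra. }
  assert (T / 4 * lam <= tauV (V n) c * lam) by (apply Rmult_le_compat_r; lra).
  lra.
Qed.
End Seq.

Section Seq2.
Variable V : nat -> R -> R.
Hypothesis hV : forall n, inV (V n).
Hypothesis h0 : cv_infty (fun n => Lap (V n) 0).

Lemma Tdiff eps delta c : 0 < eps -> eps <= delta -> 0 < c ->
  (forall e c', 0 < e -> 0 < c' -> cv_infty (fun n => Tmix (V n) e * lamV (V n) c')) ->
  ev (fun n => Rabs (Tmix (V n) eps - Tmix (V n) delta) <= ln (2 * delta / eps) * (1 / lamV (V n) c)).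
Proof.
  intros He Hed Hc HP2.
  set (c' := Rmin (eps/4) c).
  assert (Hc' : 0 < c') by (unfold c'; apply Rmin_pos; lra).
  assert (Hc1 : c' <= eps/4) by apply Rmin_l. assert (Hc2 : c' <= c) by apply Rmin_r.
  pose proof (cv_ev _ (HP2 delta c' ltac:(lra) Hc') (c / (eps/4))) as E1.
  apply (ev_imp _ _ (ev_and _ _ E1 (ev_wit V hV h0 c))). intros n [H1 Hw].
  assert (Hwc : Wit (V n) c') by (destruct Hw as [y [Hy1 Hy2]]; exists y; split; auto; lra).
  pose proof (lam_pos _ (hV n) c Hc Hw) as Hl.
  pose proof (lam_pos _ (hV n) c' Hc' Hwc) as Hl'.
  pose proof (lam_mono (V n) c' c Hc' Hc2 Hw) as Hmono.
  destruct (Tmix_spec _ (hV n) delta ltac:(lra)) as [Hu0 [Hu1 _]].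
  set (u := Tmix (V n) delta) in *.
  assert (Hln : 0 <= ln (2 * delta / eps)).
  { rewrite <- ln_1. apply ln_le. lra. apply Rmult_le_reg_r with eps; auto.
    unfold Rdiv. rewrite Rmult_assoc, Rinv_l; lra. }
  set (s := ln (2 * delta / eps) / lamV (V n) c).
  assert (Hs : 0 <= s) by (unfold s; apply Rmult_le_pos; auto; left; apply Rinv_0_lt_compat; auto).
  pose proof (K3_Lap (V n) (hV n) u s (lamV (V n) c') (lamV (V n) c) c' c Hu0 Hs Hl' Hmono ltac:(lra)
      (fun y Hy => lam_below (V n) c' y Hc' Hwc (proj1 Hy) (proj2 Hy))
      (fun y Hy => lam_below (V n) c y Hc Hw (proj1 Hy) (proj2 Hy))) as HK.
  assert (Hes : exp (- s * lamV (V n) c) = eps / (2 * delta)).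
  { replace (- s * lamV (V n) c) with (- ln (2 * delta / eps)) by (unfold s; field; lra).
    rewrite exp_Ropp, exp_ln. field. lra. apply Rdiv_lt_0_compat; lra. }
  assert (S1 : exp (- u * lamV (V n) c') * c < eps / 4).
  { rewrite Rmult_comm. replace (- u * lamV (V n) c') with (- (u * lamV (V n) c')) by ring.
    apply exp_small; lra. }
  assert (S2 : exp (- s * lamV (V n) c) * Lap (V n) u <= eps / 2).
  { rewrite Hes. apply Rle_trans with (eps / (2 * delta) * delta).
    apply Rmult_le_compat_l; auto. apply Rlt_le, Rdiv_lt_0_compat; lra.
    right; field; lra. }
  assert (HT : Tmix (V n) eps <= u + s) by (apply Tmix_le; auto; lra).
  pose proof (Tmix_anti _ (hV n) eps delta He Hed). fold u in H.
  rewrite Rabs_right by lra.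
  replace (ln (2 * delta / eps) * (1 / lamV (V n) c)) with s by (unfold s; field; lra).
  lra.
Qed.

Lemma Tau_close eps c : 0 < eps -> 0 < c -> Good V c ->
  ev (fun n => Rabs (Tmix (V n) eps - tauV (V n) c) <= 1 * sqrt (tauV (V n) c / lamV (V n) c)).
Proof.
  intros He Hc HG.
  set (c' := Rmin (eps/4) c).
  assert (Hc' : 0 < c') by (unfold c'; apply Rmin_pos; lra).
  assert (Hc1 : c' <= eps/4) by apply Rmin_l. assert (Hc2 : c' <= c) by apply Rmin_r.
  set (Q := 24 / eps + 2 * eps + 1).
  assert (HQ : 24 / eps + 2 * eps + 1 <= Q /\ 0 <= 24 / eps).
  { split. unfold Q; lra. apply Rmult_le_pos; [lra| left; apply Rinv_0_lt_compat; lra]. }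
  pose proof (cv_ev _ (HG c Hc) (Q * Q)) as E1.
  pose proof (cv_ev _ (HG c' Hc') (c / (eps/4))) as E2.
  apply (ev_imp _ _ (ev_and _ _ E1 (ev_and _ _ E2 (ev_wit V hV h0 c)))). intros n [H1 [H2 Hw]].
  assert (Hwc : Wit (V n) c') by (destruct Hw as [y [Hy1 Hy2]]; exists y; split; auto; lra).
  pose proof (lam_pos _ (hV n) c Hc Hw) as Hl.
  pose proof (lam_pos _ (hV n) c' Hc' Hwc) as Hl'.
  pose proof (lam_mono (V n) c' c Hc' Hc2 Hw) as Hmono.
  pose proof (tau_nonneg _ (hV n) c Hc Hw) as Htau0.
  set (tau := tauV (V n) c) in *. set (lam := lamV (V n) c) in *. set (lam' := lamV (V n) c') in *.
  set (s := sqrt (tau / lam)).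
  assert (Hs0 : 0 <= s) by apply sqrt_pos.
  assert (Hss : s * s = tau / lam) by (apply sqrt_sqrt; apply Rmult_le_pos; auto; left; apply Rinv_0_lt_compat; auto).
  set (x := s * lam).
  assert (Hx0 : 0 <= x) by (unfold x; nra).
  assert (Hxx : x * x = tau * lam).
  { unfold x. replace (s * lam * (s * lam)) with ((s * s) * lam * lam) by ring. rewrite Hss. field. lra. }
  assert (HxQ : Q < x).
  { apply Rnot_le_lt; intro Hle. assert (x * x <= Q * Q) by (apply Rmult_le_compat; lra). lra. }
  assert (Hsp : 0 < s).
  { destruct Hs0 as [Hp|Hz]; auto. unfold x in HxQ. rewrite <- Hz in HxQ. lra. }
  assert (Htx : tau = x * s).
  { unfold x. replace (s * lam * s) with ((s * s) * lam) by ring. rewrite Hss. field. lra. }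
  assert (Hx1 : 1 <= x) by lra.
  destruct (nat_between (x + 1)) as [m [Hm1 [Hm2 Hm3]]]; [lra|].
  assert (Hcond : tau + s <= INR m * (tau + s - tau)).
  { replace (tau + s - tau) with s by ring. rewrite Htx. nra. }
  pose proof (UH_Lap (V n) (hV n) (tau + s) tau m lam' lam c' c
      ltac:(nra) Hm1 Hcond Hl' Hmono ltac:(lra)
      (fun y Hy => lam_below (V n) c' y Hc' Hwc (proj1 Hy) (proj2 Hy))
      (fun y Hy => lam_below (V n) c y Hc Hw (proj1 Hy) (proj2 Hy))
      (fun y Hy => tau_Vbound _ (hV n) c y Hc Hw Hy)) as Hup.
  assert (T1 : exp (- (tau + s) * lam') * c < eps / 4).
  { apply Rle_lt_trans with (c * exp (- (tau * lam'))).
    rewrite Rmult_comm. apply Rmult_le_compat_l. lra. apply exp_le. nra.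
    apply exp_small; lra. }
  assert (T2 : (INR m + 1) * exp (- (tau + s - tau) * lam) < eps / 4).
  { replace (- (tau + s - tau) * lam) with (- x) by (unfold x; ring).
    apply Rle_lt_trans with ((x + 3) * exp (- x)).
    apply Rmult_le_compat_r. left; apply exp_pos. lra.
    apply lin_exp_small; try lra. replace (6 / (eps / 4)) with (24 / eps) by (field; lra). lra. }
  assert (HTu : Tmix (V n) eps <= tau + s) by (apply Tmix_le; auto; lra).
  destruct (tau_approx _ (hV n) c (s / 2) Hc Hw ltac:(lra)) as [y [Hy1 [Hy2 Hy3]]].
  fold tau lam in Hy1, Hy3.
  assert (Hts : 0 <= tau - s) by (rewrite Htx; nra).
  pose proof (Lap_lower _ (hV n) (tau - s) y Hts Hy2) as Hlow.
  assert (Hp : exp (- (tau - s) * y) * (exp ((tau - s / 2) * y) - 1) <= exp (- (tau - s) * y) * V n y)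
    by (apply Rmult_le_compat_l; [left; apply exp_pos | auto]).
  assert (Hid : exp (- (tau - s) * y) * (exp ((tau - s / 2) * y) - 1)
                = exp (s / 2 * y) - exp (- (tau - s) * y)).
  { rewrite Rmult_minus_distr_l, Rmult_1_r, <- exp_plus.
    assert (Hex : - (tau - s) * y + (tau - s / 2) * y = s / 2 * y) by field. rewrite Hex. reflexivity. }
  pose proof (exp_gt_lin (s / 2 * y)).
  assert (exp (- (tau - s) * y) <= 1) by (apply exp_le1; nra).
  assert (Hyl : s / 2 * lam <= s / 2 * y) by (apply Rmult_le_compat_l; lra).
  assert (Hxl : s / 2 * lam = x / 2) by (unfold x; field).
  assert (HTl : tau - s < Tmix (V n) eps) by (apply Tmix_gt; auto; lra).
  rewrite Rmult_1_l. fold s.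
  apply Rabs_le. lra.
Qed.
End Seq2.

Theorem theorem2p2 (V : nat -> R -> R)
  (hV : forall n, inV (V n))
  (h0 : cv_infty (fun n => Lap (V n) 0)) :
  let P1 := has_cutoff V in
  let P2 := forall eps c, 0 < eps -> 0 < c ->
              cv_infty (fun n => Tmix (V n) eps * lamV (V n) c) in
  let P3 := exists eps, 0 < eps /\ forall c, 0 < c ->
              cv_infty (fun n => Tmix (V n) eps * lamV (V n) c) in
  let P4 := forall c, 0 < c ->
              cv_infty (fun n => tauV (V n) c * lamV (V n) c) in
  let P5 := forall ct c, 0 < ct -> 0 < c ->
              cv_infty (fun n => tauV (V n) ct * lamV (V n) c) in
  let P6 := exists ct, 0 < ct /\ forall c, 0 < c ->
              cv_infty (fun n => tauV (V n) ct * lamV (V n) c) in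
  (P1 <-> P2) /\ (P1 <-> P3) /\ (P1 <-> P4) /\ (P1 <-> P5) /\ (P1 <-> P6) /\
  (P1 ->
     (forall c, 0 < c -> is_cutoff_time V (fun n => tauV (V n) c)) /\
     (forall eps delta c, 0 < eps -> 0 < delta -> 0 < c ->
        bigO (fun n => Tmix (V n) eps - Tmix (V n) delta)
             (fun n => 1 / lamV (V n) c)) /\
     (forall eps c, 0 < eps -> 0 < c ->
        bigO (fun n => Tmix (V n) eps - tauV (V n) c)
             (fun n => sqrt (tauV (V n) c / lamV (V n) c)))).
Proof.
  intros P1 P2 P3 P4 P5 P6.
  assert (H4G : P4 -> forall ct, 0 < ct -> Good V ct).
  { intros H4 ct Hct. apply diag_good; auto. }
  assert (H1_4 : P1 -> P4).
  { intros [t Ht] c Hc. apply (cutoff_P4 V hV h0 t Ht c Hc). }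
  assert (HG1 : forall ct, 0 < ct -> Good V ct -> P1).
  { intros ct Hct HG. exists (fun n => tauV (V n) ct). apply good_cutoff; auto. }
  assert (H1_2 : P1 -> P2).
  { intros [t Ht] eps c He Hc. exact (cutoff_P2 V hV h0 t Ht eps c He Hc). }
  assert (H1_5 : P1 -> P5).
  { intros H1 ct c Hct Hc. apply (H4G (H1_4 H1) ct Hct c Hc). }
  assert (H3_1 : P3 -> P1).
  { intros [eps [He H3]]. apply (HG1 (eps/2)). lra.
    apply diag_good; auto. lra. intros c Hc Hce. apply (tauT V hV h0 eps He H3); lra. }
  split; [split; [exact H1_2|]|].
  { intros H2. apply H3_1. exists 1; split; [lra|]. intros c Hc; apply (H2 1 c); lra. }
  split; [split; [|exact H3_1]|].
  { intros H1. exists 1; split; [lra|]. intros c Hc. apply (H1_2 H1 1 c); lra. }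
  split; [split; [exact H1_4|]|].
  { intros H4. apply (HG1 1); [lra|]. apply H4G; auto; lra. }
  split; [split; [exact H1_5|]|].
  { intros H5. apply (HG1 1); [lra|]. intros c Hc. apply (H5 1 c); lra. }
  split; [split|].
  { intros H1. exists 1; split; [lra|]. intros c Hc. apply (H1_5 H1 1 c); lra. }
  { intros [ct [Hct H6]]. apply (HG1 ct Hct). exact H6. }
  intros H1. split; [|split].
  - intros c Hc. exact (good_cutoff V hV h0 c Hc (H4G (H1_4 H1) c Hc)).
  - intros eps delta c He Hd Hc. pose proof (H1_2 H1) as H2.
    destruct (Rle_dec eps delta) as [Hed|Hde].
    + destruct (Tdiff V hV h0 eps delta c He Hed Hc H2) as [N HN].
      exists (ln (2 * delta / eps)), N. exact HN.
    + destruct (Tdiff V hV h0 delta eps c Hd ltac:(lra) Hc H2) as [N HN].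
      exists (ln (2 * eps / delta)), N. intros n Hn. rewrite Rabs_minus_sym. apply HN; auto.
  - intros eps c He Hc. destruct (Tau_close V hV h0 eps c He Hc (H4G (H1_4 H1) c Hc)) as [N HN].
    exists 1, N. exact HN.
Qed.
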